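(* For every integer $k\ge 2$, the smallest $k$-admissible number is $2^{\binom{k}{2}+\nu_2(k)}$.
   Context: $\nu_2(x)$ denotes the 2-adic valuation of a positive integer $x$. For an integer $k\ge 1$, an integer $n$ is called $k$-admissible if $n>k$ and $\binom{n}{k}$ is divisible by $2^{\binom{k}{2}}$. *)

(* Defs.v *)
From mathcomp Require Import all_boot.

Definition nu2 (x : nat) : nat := logn 2 x.

Definition admissible (k n : nat) : bool :=
  (k < n) && (2 ^ 'C(k, 2) %| 'C(n, k)).

(* Main.v *)
Require Import Defs.
From mathcomp Require Import all_boot.
From mathcomp Require Import zify.

Lemma logfact_ext m N : m <= N ->
  logn 2 m`! = \sum_(1 <= i < N.+1) m %/ 2 ^ i.
Proof.
move=> hmN; rewrite logn_fact //.
rewrite [RHS](big_cat_nat _ (n:=m.+1)) //=.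
rewrite [X in _ = _ + X]big1_seq ?addn0 // => i /andP[_].
rewrite mem_index_iota => /andP[hi _]; apply: divn_small.
apply: leq_trans (ltn_expl m (isT : 1 < 2)) _.
by apply: leq_pexp2l => //; apply: ltnW.
Qed.

Lemma keyA n k : 0 < k -> k <= n -> 2 ^ (logn 2 'C(n,k) + logn 2 k) <= n.
Proof.
move=> k0 kn.
have n0 : 0 < n by apply: leq_trans kn.
set c := logn 2 'C(n,k); set v := logn 2 k; set t := trunc_log 2 n.
have hf : logn 2 n`! = c + logn 2 k`! + logn 2 (n-k)`!.
  rewrite -(bin_fact kn) lognM ?bin_gt0 // ?muln_gt0 ?fact_gt0 // lognM ?fact_gt0 //.
  by rewrite addnA.
rewrite (@logfact_ext n n (leqnn n)) (@logfact_ext k n kn) (@logfact_ext (n-k) n (leq_subr k n)) in hf.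
set b := fun i => (2 ^ i <= k %% 2 ^ i + (n - k) %% 2 ^ i).
have hs : \sum_(1 <= i < n.+1) n %/ 2 ^ i =
   \sum_(1 <= i < n.+1) k %/ 2 ^ i + \sum_(1 <= i < n.+1) (n-k) %/ 2 ^ i
   + \sum_(1 <= i < n.+1) (b i : nat).
  rewrite -!big_split /=; apply: eq_bigr => i _.
  by rewrite -divnD ?expn_gt0 // subnKC.
have hc : c = \sum_(1 <= i < n.+1) (b i : nat) by lia.
have vk : 2 ^ v <= k by apply: dvdn_leq => //; apply: pfactor_dvdnn.
have vt : v <= t by apply: trunc_log_max => //; apply: leq_trans kn.
have tn : t <= n.
  apply: ltnW; apply: leq_trans (ltn_expl t (isT : 1 < 2)) _.
  exact: trunc_logP.
have hct : c <= t - v.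
  rewrite hc (big_cat_nat _ (n:=v.+1)) //=; last by rewrite ltnS (leq_trans vt).
  rewrite big1_seq ?add0n; last first.
    move=> i /andP[_]; rewrite mem_index_iota => /andP[_ hi].
    rewrite /b; apply/eqP; rewrite eqb0 -ltnNge.
    have : 2 ^ i %| k.
      apply: dvdn_trans (pfactor_dvdnn 2 k); rewrite dvdn_exp2l //.
    by rewrite /dvdn => /eqP ->; rewrite add0n ltn_pmod // expn_gt0.
  rewrite (big_cat_nat _ (n:=t.+1)) //=.
  rewrite [X in _ + X]big1_seq ?addn0; last first.
    move=> i /andP[_]; rewrite mem_index_iota => /andP[hi _].
    rewrite /b; apply/eqP; rewrite eqb0 -ltnNge.
    have h1 : k %% 2 ^ i + (n - k) %% 2 ^ i <= n.
      by rewrite -[leqRHS](subnKC kn) leq_add // leq_mod.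
    apply: leq_ltn_trans h1 _; apply: leq_trans (trunc_log_ltn n (isT : 1 < 2)) _.
    exact: leq_pexp2l.
  apply: (@leq_trans (\sum_(v.+1 <= i < t.+1) 1)); first by apply: leq_sum => i _; exact: leq_b1.
  by rewrite sum_nat_const_nat muln1 subSS.
apply: leq_trans (trunc_logP (isT : 1 < 2) n0).
by apply: leq_pexp2l => //; lia.
Qed.

Theorem mainTheorem2 (k : nat) (hk : 2 <= k) :
  admissible k (2 ^ ('C(k, 2) + nu2 k)) /\
  (forall n : nat, admissible k n -> 2 ^ ('C(k, 2) + nu2 k) <= n).
Proof.
rewrite /admissible /nu2.
set m := 'C(k, 2); set v := logn 2 k.
have k0 : 0 < k by apply: leq_trans hk.
have kN : k < 2 ^ (m + v).
  case: k hk @m @v k0 => [|[|[|j]]] //= _ _.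
  have hm : j.+3 <= 'C(j.+3, 2).
    rewrite binS bin1. have := bin_gt0 j.+2 2. lia.
  apply: leq_trans (ltn_expl _ (isT : 1 < 2)) _.
  by apply: leq_pexp2l => //; apply: leq_trans hm (leq_addr _ _).
split.
  rewrite kN /=.
  set N := 2 ^ (m + v).
  have Cpos : 0 < 'C(N, k) by rewrite bin_gt0 ltnW.
  rewrite pfactor_dvdn //.
  have e := mul_bin_diag N k.-1.
  rewrite prednK // in e.
  have N0 : 0 < N by rewrite expn_gt0.
  have e2 : logn 2 (N * 'C(N.-1, k.-1)) = logn 2 (k * 'C(N, k)) by rewrite e.
  rewrite lognM // ?bin_gt0 in e2; last by lia.
  rewrite lognM // in e2.
  rewrite /N pfactorK // in e2.
  rewrite /N; lia.
move=> n /andP[kn hd].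
have Cpos : 0 < 'C(n, k) by rewrite bin_gt0 ltnW.
rewrite pfactor_dvdn // in hd.
have hA := @keyA n k k0 (ltnW kn). apply: (leq_trans _ hA).
by apply: leq_pexp2l => //; rewrite leq_add2r.
Qed.
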